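(* For every $\ell\ge0$, the coefficients of $\hbar^s$, $s\le\ell$, in the asymptotic expansion $$\mathrm{Tr}(t,\hbar)\sim\sum_{m=0}^\infty\frac{(it)^m}{m!}\Big(\sum_{|r|\ge1}\hbar^{|r|-1}c_r(\hbar)\Big(\frac1tD_\theta\Big)^r\Big)^m\frac{e^{\frac{it}{2}\sum_j\theta_j}}{\prod_j(1-e^{it\theta_j})}\Bigg|_{\theta=u}$$ determine the coefficients of $\hbar^s$, $s\le\ell$, in the series $$V(t,\hbar)=\sum_{|r|\ge1}\hbar^{|r|-1}c_r(\hbar)\Big(\frac1tD_\theta\Big)^r\frac{e^{\frac{it}{2}\sum_j\theta_j}}{\prod_j(1-e^{it\theta_j})}\Bigg|_{\theta=u}.$$
   Context: Here $u=(u_1,\dots,u_n)$ has positive entries linearly independent over $\mathbb{Q}$, $D_\theta=-i(\partial_{\theta_1},\dots,\partial_{\theta_n})$, $r\in\mathbb{Z}_{\ge0}^n$, and $c_r(\hbar)=\sum_{i\ge0}c_{r,i}\hbar^{|r|-1+i}$ with $c_r(0)=0$ when $|r|=1$ (the coefficients of the semi-classical Birkhoff canonical form). *)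

(* Defs.v *)
From Stdlib Require Import Reals List QArith Qreals.
From Coquelicot Require Import Coquelicot.
Import ListNotations.
Open Scope R_scope.

Definition ce (x : R) : C := (cos x, sin x).

(* points theta = (theta_0, ..., theta_{n-1}) are functions nat -> R
   (only the first n coordinates matter) *)
Definition upd (th : nat -> R) (j : nat) (x : R) : nat -> R :=
  fun k => if Nat.eqb k j then x else th k.

Definition Rsum_lt (n : nat) (f : nat -> R) : R :=
  fold_right Rplus 0 (map f (seq 0%nat n)).
Definition Csum (l : list C) : C := fold_right Cplus (RtoC 0) l.
Definition Cprod_lt (n : nat) (f : nat -> C) : C :=
  fold_right Cmult (RtoC 1) (map f (seq 0%nat n)).

Definition Fun := (nat -> R) -> C.

Definition Dpart (j : nat) (g : Fun) : Fun :=
  fun th => Cmult (Copp Ci)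
    (Derive (fun x => fst (g (upd th j x))) (th j),
     Derive (fun x => snd (g (upd th j x))) (th j)).

Fixpoint iter_op (k : nat) (op : Fun -> Fun) (g : Fun) : Fun :=
  match k with O => g | S k' => op (iter_op k' op g) end.

(* D_theta^r for a multi-index r = [r_0; ...; r_{n-1}], starting at coordinate j *)
Fixpoint Dmulti_from (j : nat) (r : list nat) (g : Fun) : Fun :=
  match r with
  | [] => g
  | a :: r' => iter_op a (Dpart j) (Dmulti_from (S j) r' g)
  end.
Definition Dmulti (r : list nat) (g : Fun) : Fun := Dmulti_from 0 r g.

Fixpoint multi (n d : nat) : list (list nat) :=
  match n with
  | O => match d with O => [[]] | _ => [] end
  | S n' => flat_map (fun a => map (cons a) (multi n' (d - a))) (seq 0%nat (S d))
  end.

Definition lsum (r : list nat) : nat := fold_right Nat.add O r.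

Definition Fmodel (n : nat) (t : R) : Fun :=
  fun th => Cdiv (ce (t / 2 * Rsum_lt n th))
                 (Cprod_lt n (fun j => Cminus (RtoC 1) (ce (t * th j)))).

(* Coefficients c_{r,i}: c r i, so that c_r(hbar) = sum_i c r i hbar^{|r|-1+i}.
   The operator  P = sum_{|r|>=1} hbar^{|r|-1} c_r(hbar) (t^{-1} D_theta)^r
   is a formal series  sum_k hbar^k P_k  with
   P_k = sum_{|r| = d >= 1, 2d-2 <= k} c_{r, k+2-2d} t^{-d} D_theta^r. *)
Definition Pk (n : nat) (c : list nat -> nat -> R) (t : R) (k : nat) (g : Fun) : Fun :=
  fun th =>
    Csum (flat_map (fun d =>
            if Nat.leb (2 * d - 2)%nat k then
              map (fun r => Cmult (RtoC (c r (k + 2 - 2 * d)%nat * / (t ^ d)))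
                                  (Dmulti r g th))
                  (multi n d)
            else [])
         (seq 1%nat (S k))).

Definition Pcomp (n : nat) (c : list nat -> nat -> R) (t : R) (ks : list nat) (g : Fun) : Fun :=
  fold_right (fun k h => Pk n c t k h) g ks.

Fixpoint fact_R (m : nat) : R :=
  match m with O => 1 | S m' => INR m * fact_R m' end.

(* Coefficient of hbar^s in  sum_m (it)^m/m! P^m F |_{theta=u}.
   The coefficient of hbar^s in P^m is sum_{k_1+...+k_m = s} P_{k_1}...P_{k_m};
   since P_0 = 0 (because c_r(0)=0 for |r|=1), terms with m > s vanish,
   so the sum over m is truncated at m = s. *)
Definition TrCoef (n : nat) (c : list nat -> nat -> R) (u : nat -> R) (t : R) (s : nat) : C :=
  Csum (map (fun m =>
     Cmult (Cdiv (Cpow (Cmult Ci (RtoC t)) m) (RtoC (fact_R m)))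
           (Csum (map (fun ks => Pcomp n c t ks (Fmodel n t) u) (multi m s))))
   (seq 0%nat (S s))).

(* Coefficient of hbar^s in  V(t,hbar) = P F |_{theta=u} *)
Definition VCoef (n : nat) (c : list nat -> nat -> R) (u : nat -> R) (t : R) (s : nat) : C :=
  Pk n c t s (Fmodel n t) u.

Definition Q_lin_indep (n : nat) (u : nat -> R) : Prop :=
  forall q : nat -> Q,
    Rsum_lt n (fun j => Q2R (q j) * u j) = 0 -> forall j, (j < n)%nat -> q j == 0%Q.

(* admissible times: t <> 0 and the model function is regular at theta = u *)
Definition good_time (n : nat) (u : nat -> R) (t : R) : Prop :=
  t <> 0 /\ forall j, (j < n)%nat -> ce (t * u j) <> RtoC 1.

Definition c_admissible (n : nat) (c : list nat -> nat -> R) : Prop :=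
  forall r, length r = n -> lsum r = 1%nat -> c r 0%nat = 0.

(* Main.v *)
Require Import Defs.
From Stdlib Require Import Reals List QArith Qreals Lia Lra FunctionalExtensionality.
From Coquelicot Require Import Coquelicot.
Import ListNotations.
Open Scope R_scope.

Lemma Csum_app l1 l2 : Csum (l1 ++ l2) = Cplus (Csum l1) (Csum l2).
Proof. induction l1; simpl. rewrite Cplus_0_l; auto. rewrite IHl1. ring. Qed.

Lemma Csum_map_ext_in {A} (f g : A -> C) l :
  (forall x, In x l -> f x = g x) -> Csum (map f l) = Csum (map g l).
Proof. intros H; f_equal; apply map_ext_in; auto. Qed.

Lemma Csum_map_zero {A} (f : A -> C) l :
  (forall x, In x l -> f x = RtoC 0) -> Csum (map f l) = RtoC 0.
Proof. induction l; simpl; intros H; auto. rewrite H, IHl; auto. ring. Qed.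

Lemma Csum_map_scal {A} (a : C) (f : A -> C) l :
  Csum (map (fun x => Cmult a (f x)) l) = Cmult a (Csum (map f l)).
Proof. induction l; simpl. ring. rewrite IHl; ring. Qed.

Lemma Csum_map_plus {A} (f g : A -> C) l :
  Csum (map (fun x => Cplus (f x) (g x)) l) = Cplus (Csum (map f l)) (Csum (map g l)).
Proof. induction l; simpl. ring. rewrite IHl; ring. Qed.

Lemma Csum_map_minus {A} (f g : A -> C) l :
  Csum (map (fun x => Cminus (f x) (g x)) l) = Cminus (Csum (map f l)) (Csum (map g l)).
Proof. induction l; simpl. ring. rewrite IHl; ring. Qed.

Lemma Csum_flat_map {A B} (f : B -> C) (g : A -> list B) l :
  Csum (map f (flat_map g l)) = Csum (map (fun x => Csum (map f (g x))) l).
Proof. induction l; simpl; auto. rewrite map_app, Csum_app, IHl; auto. Qed.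

Lemma Csum_swap {A B} (f : A -> B -> C) l1 l2 :
  Csum (map (fun x => Csum (map (f x) l2)) l1) =
  Csum (map (fun y => Csum (map (fun x => f x y) l1)) l2).
Proof.
  induction l1; simpl.
  - symmetry; apply Csum_map_zero; auto.
  - rewrite IHl1. rewrite <- Csum_map_plus. auto.
Qed.

Lemma seq_S0 n : seq 0 (S n) = 0%nat :: map S (seq 0 n).
Proof. simpl. rewrite seq_shift. auto. Qed.

Lemma Cprod_lt_S n f : Cprod_lt (S n) f = Cmult (f 0%nat) (Cprod_lt n (fun j => f (S j))).
Proof. unfold Cprod_lt. rewrite seq_S0. simpl. rewrite map_map. auto. Qed.

Lemma Rsum_lt_S n f : Rsum_lt (S n) f = f 0%nat + Rsum_lt n (fun j => f (S j)).
Proof. unfold Rsum_lt. rewrite seq_S0. simpl. rewrite map_map. auto. Qed.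

Lemma Cprod_lt_0 f : Cprod_lt 0 f = RtoC 1.
Proof. reflexivity. Qed.
Lemma Rsum_lt_0 f : Rsum_lt 0 f = 0.
Proof. reflexivity. Qed.

Lemma Cprod_lt_ext n f g : (forall j, (j < n)%nat -> f j = g j) -> Cprod_lt n f = Cprod_lt n g.
Proof.
  revert f g; induction n; intros f g H; auto.
  rewrite !Cprod_lt_S. rewrite H by lia. f_equal. apply IHn. intros; apply H; lia.
Qed.

Lemma Rsum_lt_ext n f g : (forall j, (j < n)%nat -> f j = g j) -> Rsum_lt n f = Rsum_lt n g.
Proof.
  revert f g; induction n; intros f g H; auto.
  rewrite !Rsum_lt_S. rewrite H by lia. f_equal. apply IHn. intros; apply H; lia.
Qed.

Lemma Cprod_lt_mult n f g : Cprod_lt n (fun j => Cmult (f j) (g j)) = Cmult (Cprod_lt n f) (Cprod_lt n g).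
Proof.
  revert f g; induction n; intros f g. simpl. unfold Cprod_lt; simpl. ring.
  rewrite !Cprod_lt_S. rewrite IHn. ring.
Qed.

Lemma Cprod_lt_upd n f j : (j < n)%nat ->
  exists K, forall v, Cprod_lt n (fun k => if Nat.eqb k j then v else f k) = Cmult v K.
Proof.
  revert f j; induction n; intros f j Hj. lia.
  destruct j.
  - exists (Cprod_lt n (fun k => f (S k))). intros w. rewrite Cprod_lt_S. simpl. auto.
  - destruct (IHn (fun k => f (S k)) j) as [K HK]. lia.
    exists (Cmult (f 0%nat) K). intros w. rewrite Cprod_lt_S. simpl.
    rewrite (HK w). ring.
Qed.
Lemma C_ext (x y : C) : fst x = fst y -> snd x = snd y -> x = y.
Proof. destruct x, y; simpl; intros; subst; auto. Qed.

Lemma ce_add a b : ce (a + b) = Cmult (ce a) (ce b).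
Proof. unfold ce; apply C_ext; simpl; rewrite ?cos_plus, ?sin_plus; ring. Qed.

Lemma ce_0 : ce 0 = RtoC 1.
Proof. unfold ce; rewrite cos_0, sin_0; auto. Qed.

Lemma ce_pow a k : Cpow (ce a) k = ce (INR k * a).
Proof.
  induction k. simpl. rewrite Rmult_0_l, ce_0; auto.
  simpl Cpow. rewrite IHk, <- ce_add. f_equal. rewrite S_INR; ring.
Qed.

Lemma ce_neq0 a : ce a <> RtoC 0.
Proof.
  unfold ce. intros H. injection H; intros H1 H2.
  pose proof (sin2_cos2 a). rewrite H1, H2 in H0. unfold Rsqr in H0. lra.
Qed.

Lemma ce_not1 y : 0 < y < 2 * PI -> ce y <> RtoC 1.
Proof.
  intros Hy H. unfold ce in H. injection H; intros Hs Hc.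
  destruct (Rtotal_order y PI) as [Hl|[He|Hg]].
  - assert (0 < sin y) by (apply sin_gt_0; lra). lra.
  - subst. rewrite cos_PI in Hc. lra.
  - assert (sin y < 0) by (apply sin_lt_0; lra). lra.
Qed.

Lemma ce_not1' y : 0 < Rabs y < 2 * PI -> ce y <> RtoC 1.
Proof.
  intros Hy H. destruct (Rcase_abs y) as [Hn|Hp].
  - rewrite Rabs_left in Hy by auto.
    apply (ce_not1 (-y)); auto.
    unfold ce in *. injection H; intros Hs Hc. rewrite cos_neg, sin_neg, Hc, Hs.
    apply C_ext; simpl; lra.
  - rewrite Rabs_right in Hy by auto. apply (ce_not1 y); auto.
Qed.

Lemma Cprod_ce n f : Cprod_lt n (fun j => ce (f j)) = ce (Rsum_lt n f).
Proof.
  revert f; induction n; intros f. rewrite Cprod_lt_0, Rsum_lt_0, ce_0; auto.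
  rewrite Cprod_lt_S, Rsum_lt_S, IHn, ce_add; auto.
Qed.

Lemma ce_half y : ce y = Cpow (ce (y / 2)) 2.
Proof. rewrite ce_pow. f_equal. simpl. field. Qed.

Lemma isd_plus (f g : R -> R) y a b : is_derive f y a -> is_derive g y b ->
  is_derive (fun x => f x + g x) y (a + b).
Proof. intros H1 H2. exact (is_derive_plus f g y a b H1 H2). Qed.
Lemma isd_minus (f g : R -> R) y a b : is_derive f y a -> is_derive g y b ->
  is_derive (fun x => f x - g x) y (a - b).
Proof. intros H1 H2. exact (is_derive_minus f g y a b H1 H2). Qed.
Lemma isd_opp (f : R -> R) y a : is_derive f y a -> is_derive (fun x => - f x) y (- a).
Proof. intros H1. exact (is_derive_opp f y a H1). Qed.
Lemma isd_mult (f g : R -> R) y a b : is_derive f y a -> is_derive g y b ->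
  is_derive (fun x => f x * g x) y (a * g y + f y * b).
Proof. intros H1 H2. exact (is_derive_mult f g y a b H1 H2 Rmult_comm). Qed.
Lemma isd_const (c : R) y : is_derive (fun _ => c) y 0.
Proof. exact (is_derive_const c y). Qed.
Lemma isd_ext (f g : R -> R) y a : (forall x, f x = g x) -> is_derive f y a -> is_derive g y a.
Proof. intros H H1. apply (is_derive_ext f g); auto. Qed.
Lemma isd_val (f : R -> R) (y a b : R) : a = b -> is_derive f y a -> is_derive f y b.
Proof. intros ->; auto. Qed.
Lemma isd_div (f g : R -> R) y a b : is_derive f y a -> is_derive g y b -> g y <> 0 ->
  is_derive (fun x => f x / g x) y ((a * g y - f y * b) / (g y ^ 2)).
Proof. intros H1 H2 H3. exact (is_derive_div f g y a b H1 H2 H3). Qed.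
Lemma isd_lin (f : R -> R) t y a : is_derive f (t * y) a -> is_derive (fun x => f (t * x)) y (t * a).
Proof.
  intros H. assert (Hl : is_derive (fun x => t * x) y t).
  { auto_derive; auto; ring. }
  exact (is_derive_comp f (fun x => t * x) y a t H Hl).
Qed.

Definition CD (f : R -> C) (y : R) (v : C) :=
  is_derive (fun x => fst (f x)) y (fst v) /\ is_derive (fun x => snd (f x)) y (snd v).

Lemma CD_val f y a b : a = b -> CD f y a -> CD f y b.
Proof. intros ->; auto. Qed.

Lemma CD_ext f g y a : (forall x, f x = g x) -> CD f y a -> CD g y a.
Proof. intros H [H1 H2]; split; eapply isd_ext; eauto; intros x; simpl; rewrite H; auto. Qed.

Lemma CD_ext_loc f g y a : locally y (fun x => f x = g x) -> CD f y a -> CD g y a.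
Proof.
  intros H [H1 H2]; split.
  - eapply is_derive_ext_loc; [|exact H1]. eapply filter_imp; [|exact H]. intros x Hx; simpl; rewrite Hx; auto.
  - eapply is_derive_ext_loc; [|exact H2]. eapply filter_imp; [|exact H]. intros x Hx; simpl; rewrite Hx; auto.
Qed.

Lemma CD_const c y : CD (fun _ => c) y (RtoC 0).
Proof. split; simpl; apply isd_const. Qed.

Lemma CD_plus f g y a b : CD f y a -> CD g y b -> CD (fun x => Cplus (f x) (g x)) y (Cplus a b).
Proof. intros [H1 H2] [H3 H4]; split; simpl; apply isd_plus; auto. Qed.

Lemma CD_minus f g y a b : CD f y a -> CD g y b -> CD (fun x => Cminus (f x) (g x)) y (Cminus a b).
Proof.
  intros [H1 H2] [H3 H4]; split; simpl.
  - apply (isd_val _ _ (fst a - fst b)); [simpl; ring|]. eapply isd_ext; [|apply isd_minus; eauto]. intros; simpl; ring.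
  - apply (isd_val _ _ (snd a - snd b)); [simpl; ring|]. eapply isd_ext; [|apply isd_minus; eauto]. intros; simpl; ring.
Qed.

Lemma CD_mult f g y a b : CD f y a -> CD g y b ->
  CD (fun x => Cmult (f x) (g x)) y (Cplus (Cmult a (g y)) (Cmult (f y) b)).
Proof.
  intros [H1 H2] [H3 H4]; split; simpl.
  - apply (isd_val _ _ ((fst a * fst (g y) + fst (f y) * fst b) - (snd a * snd (g y) + snd (f y) * snd b))).
    { simpl; ring. }
    apply isd_minus; apply isd_mult; auto.
  - apply (isd_val _ _ ((fst a * snd (g y) + fst (f y) * snd b) + (snd a * fst (g y) + snd (f y) * fst b))).
    { simpl; ring. }
    apply isd_plus; apply isd_mult; auto.
Qed.

Lemma CD_lin f t y a : CD f (t * y) a -> CD (fun x => f (t * x)) y (Cmult (RtoC t) a).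
Proof.
  intros [H1 H2]; split; simpl.
  - apply (isd_val _ _ (t * fst a)); [ring|]. apply (isd_lin (fun x => fst (f x))); auto.
  - apply (isd_val _ _ (t * snd a)); [ring|]. apply (isd_lin (fun x => snd (f x))); auto.
Qed.

Lemma CD_ce a y : CD (fun x => ce (a * x)) y (Cmult (Cmult Ci (RtoC a)) (ce (a * y))).
Proof.
  split; simpl.
  - apply (isd_val _ _ (a * - sin (a * y))); [ring|]. apply (isd_lin cos). apply is_derive_cos.
  - apply (isd_val _ _ (a * cos (a * y))); [ring|]. apply (isd_lin sin). apply is_derive_sin.
Qed.

Lemma CD_inv f y a : f y <> RtoC 0 -> CD f y a ->
  CD (fun x => Cinv (f x)) y (Copp (Cdiv a (Cmult (f y) (f y)))).
Proof.
  intros Hnz [H1 H2].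
  assert (Hn : fst (f y) ^ 2 + snd (f y) ^ 2 <> 0).
  { intros Hc. apply Hnz. destruct (f y) as [u v]; simpl in *.
    assert (u = 0) by nra. assert (v = 0) by nra. subst; auto. }
  assert (Hd : is_derive (fun x => fst (f x) ^ 2 + snd (f x) ^ 2) y
                 (INR 2 * fst a * fst (f y) ^ 1 + INR 2 * snd a * snd (f y) ^ 1)).
  { apply isd_plus; apply (is_derive_pow (fun x => fst (f x))) || apply (is_derive_pow (fun x => snd (f x))); auto. }
  split; simpl.
  - eapply isd_val; [|apply isd_div; [exact H1|exact Hd|exact Hn]].
    destruct a as [a1 a2]; destruct (f y) as [u v]; simpl in *.
    unfold Cdiv, Cinv, Cmult, Copp; simpl. field. simpl in Hn.
    assert (Hn' : u * u + v * v <> 0) by (contradict Hn; rewrite <- Hn; ring).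
    split; auto. replace ((u * u - v * v) * (u * u - v * v) + (u * v + v * u) * (u * v + v * u))
      with ((u*u+v*v)*(u*u+v*v)) by ring. apply Rmult_integral_contrapositive; auto.
  - eapply isd_val; [|apply isd_div; [apply isd_opp; exact H2|exact Hd|exact Hn]].
    destruct a as [a1 a2]; destruct (f y) as [u v]; simpl in *.
    unfold Cdiv, Cinv, Cmult, Copp; simpl. field. simpl in Hn.
    assert (Hn' : u * u + v * v <> 0) by (contradict Hn; rewrite <- Hn; ring).
    split; auto. replace ((u * u - v * v) * (u * u - v * v) + (u * v + v * u) * (u * v + v * u))
      with ((u*u+v*v)*(u*u+v*v)) by ring. apply Rmult_integral_contrapositive; auto.
Qed.

Lemma CD_pow f y a k : CD f y a ->
  CD (fun x => Cpow (f x) k) y (Cmult (Cmult (RtoC (INR k)) (Cpow (f y) (pred k))) a).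
Proof.
  intros H. induction k.
  - simpl Cpow. apply (CD_val _ _ (RtoC 0)); [|apply CD_const]. simpl. apply C_ext; simpl; ring.
  - simpl Cpow. eapply CD_val; [|apply CD_mult; [exact H| exact IHk]].
    destruct k. simpl. apply C_ext; simpl; ring.
    simpl pred. simpl Cpow. rewrite !S_INR, !RtoC_plus.
    set (P := Cpow (f y) k). set (z := f y). set (r := INR k). ring.
Qed.

Lemma CD_derive_fst f y a : CD f y a -> Derive (fun x => fst (f x)) y = fst a.
Proof. intros [H _]. apply is_derive_unique; auto. Qed.
Lemma CD_derive_snd f y a : CD f y a -> Derive (fun x => snd (f x)) y = snd a.
Proof. intros [_ H]. apply is_derive_unique; auto. Qed.

Definition ev (P : nat -> R) (B : nat) (w : C) : C :=
  Csum (map (fun a => Cmult (RtoC (P a)) (Cpow w a)) (seq 0 B)).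

Lemma ev_S P B w : ev P (S B) w = Cplus (ev P B w) (Cmult (RtoC (P B)) (Cpow w B)).
Proof. unfold ev. rewrite seq_S, map_app, Csum_app. simpl. rewrite Cplus_0_r. auto. Qed.

Lemma ev_0 P w : ev P 0 w = RtoC 0.
Proof. reflexivity. Qed.

Definition supp (P : nat -> R) (B : nat) := forall a, (B <= a)%nat -> P a = 0.

Lemma ev_ext_bound P B B' w : supp P B -> (B <= B')%nat -> ev P B' w = ev P B w.
Proof.
  intros HS Hle. induction Hle; auto. rewrite ev_S, IHHle, HS by lia. rewrite Cmult_0_l, Cplus_0_r. auto.
Qed.

Lemma ev_plus P Q B w : ev (fun a => P a + Q a) B w = Cplus (ev P B w) (ev Q B w).
Proof. induction B. rewrite !ev_0. ring. rewrite !ev_S, IHB, RtoC_plus. ring. Qed.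
Lemma ev_minus P Q B w : ev (fun a => P a - Q a) B w = Cminus (ev P B w) (ev Q B w).
Proof. induction B. rewrite !ev_0. ring. rewrite !ev_S, IHB, RtoC_minus. ring. Qed.
Lemma ev_scal c P B w : ev (fun a => c * P a) B w = Cmult (RtoC c) (ev P B w).
Proof. induction B. rewrite !ev_0. ring. rewrite !ev_S, IHB, RtoC_mult. ring. Qed.
Lemma ev_ext P Q B w : (forall a, P a = Q a) -> ev P B w = ev Q B w.
Proof. intros H. unfold ev. f_equal. apply map_ext. intros; rewrite H; auto. Qed.

Definition shift2 (P : nat -> R) (a : nat) : R :=
  match a with O => 0 | S O => 0 | S (S a') => P a' end.

Lemma ev_shift2 P B w : ev (shift2 P) (S (S B)) w = Cmult (Cpow w 2) (ev P B w).
Proof.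
  induction B.
  - rewrite !ev_S, ev_0. simpl. apply C_ext; simpl; ring.
  - rewrite ev_S, IHB, ev_S. simpl shift2. simpl Cpow. ring.
Qed.

Definition halfd (P : nat -> R) (a : nat) : R := INR a / 2 * P a.

Fixpoint Npol (m : nat) : nat -> R :=
  match m with
  | O => fun a => if Nat.eqb a 1 then 1 else 0
  | S m' => fun a => halfd (Npol m') a - shift2 (halfd (Npol m')) a + INR (S m') * shift2 (Npol m') a
  end.

Lemma supp_shift2 P B : supp P B -> supp (shift2 P) (S (S B)).
Proof. intros H a Ha. destruct a as [|[|a]]; simpl; auto; apply H; lia. Qed.
Lemma supp_halfd P B : supp P B -> supp (halfd P) B.
Proof. intros H a Ha. unfold halfd. rewrite H; auto; ring. Qed.

Lemma supp_Npol m : supp (Npol m) (2 * m + 2).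
Proof.
  induction m; intros a Ha; simpl.
  - destruct (Nat.eqb_spec a 1); auto; lia.
  - pose proof (supp_halfd _ _ IHm) as H1.
    pose proof (supp_shift2 _ _ H1) as H2. pose proof (supp_shift2 _ _ IHm) as H3.
    rewrite H1, H2, H3 by lia. ring.
Qed.

Lemma Npol_S m : Npol (S m) = fun a => halfd (Npol m) a - shift2 (halfd (Npol m)) a + INR (S m) * shift2 (Npol m) a.
Proof. reflexivity. Qed.

Lemma ev_Npol_S m w :
  ev (Npol (S m)) (2 * S m + 2) w =
  Cplus (Cmult (ev (halfd (Npol m)) (2 * m + 2) w) (Cminus (RtoC 1) (Cpow w 2)))
        (Cmult (Cmult (RtoC (INR (S m))) (Cpow w 2)) (ev (Npol m) (2 * m + 2) w)).
Proof.
  rewrite Npol_S. rewrite ev_plus, ev_minus, ev_scal.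
  replace (2 * S m + 2)%nat with (S (S (2 * m + 2))) by lia.
  rewrite !ev_shift2. rewrite (ev_ext_bound (halfd (Npol m)) (2*m+2)); [|apply supp_halfd, supp_Npol|lia].
  ring.
Qed.

Lemma ev_Npol_0 w : ev (Npol 0) 2 w = w.
Proof. rewrite !ev_S, ev_0. simpl. apply C_ext; simpl; ring. Qed.

Lemma CD_ev P B y :
  CD (fun x => ev P B (ce (x / 2))) y (Cmult Ci (ev (halfd P) B (ce (y / 2)))).
Proof.
  induction B.
  - apply (CD_ext (fun _ => RtoC 0)); [intros; rewrite ev_0; auto|].
    apply (CD_val _ _ (RtoC 0)); [|apply CD_const]. rewrite ev_0. ring.
  - apply (CD_ext (fun x => Cplus (ev P B (ce (x / 2))) (Cmult (RtoC (P B)) (ce ((INR B / 2) * x))))).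
    { intros x. rewrite ev_S, ce_pow. do 3 f_equal. field. }
    eapply CD_val; [|apply CD_plus; [exact IHB|apply CD_mult; [apply CD_const| apply CD_ce]]].
    rewrite ev_S, ce_pow. replace (INR B * (y / 2)) with ((INR B / 2) * y) by (field).
    unfold halfd. rewrite RtoC_mult. ring.
Qed.

Definition phi (m : nat) (y : R) : C :=
  Cmult (ev (Npol m) (2 * m + 2) (ce (y / 2))) (Cpow (Cinv (Cminus (RtoC 1) (ce y))) (S m)).

Lemma CD_phi m y : ce y <> RtoC 1 -> CD (phi m) y (Cmult Ci (phi (S m) y)).
Proof.
  intros Hy.
  assert (HD : Cminus (RtoC 1) (ce y) <> RtoC 0).
  { intros H; apply Hy. rewrite <- (Cplus_0_l (ce y)), <- H. ring. }
  assert (HV : CD (fun x => Cinv (Cminus (RtoC 1) (ce x))) y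
                  (Copp (Cdiv (Copp (Cmult (Cmult Ci (RtoC 1)) (ce (1 * y))))
                   (Cmult (Cminus (RtoC 1) (ce y)) (Cminus (RtoC 1) (ce y)))))).
  { apply CD_inv; auto.
    apply (CD_ext (fun x => Cminus (RtoC 1) (ce (1 * x)))); [intros x; rewrite Rmult_1_l; auto|].
    eapply CD_val; [|apply CD_minus; [apply CD_const|apply CD_ce]]. ring. }
  unfold phi. eapply CD_val; [|apply CD_mult; [apply CD_ev|apply CD_pow; exact HV]].
  rewrite ev_Npol_S. rewrite Rmult_1_l. clear HV.
  rewrite (ce_half y).
  rewrite (ce_half y) in HD.
  set (w := ce (y / 2)) in *.
  set (E := ev (Npol m) (2 * m + 2) w). set (H := ev (halfd (Npol m)) (2 * m + 2) w).
  simpl pred.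
  set (Dn := Cminus (RtoC 1) (Cpow w 2)) in *.
  set (P := Cpow (Cinv Dn) m).
  simpl Cpow. fold P. rewrite S_INR, RtoC_plus.
  field. auto.
Qed.

Lemma locally_ne (f : R -> R) x0 c : continuity_pt f x0 -> f x0 <> c ->
  locally x0 (fun x => f x <> c).
Proof.
  intros Hc Hne.
  assert (He : Rabs (f x0 - c) > 0) by (apply Rabs_pos_lt; lra).
  destruct (Hc _ He) as [alp [Ha H]].
  exists (mkposreal alp Ha). intros y Hy Hfy.
  destruct (Req_dec y x0) as [->|Hyx]; [auto|].
  assert (Hd : R_dist (f y) (f x0) < Rabs (f x0 - c)).
  { apply (H y). split. split; [constructor| auto]. unfold R_dist.
    unfold ball in Hy; simpl in Hy; unfold AbsRing_ball, abs, minus, plus, opp in Hy; simpl in Hy. auto. }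
  unfold R_dist in Hd. rewrite Hfy in Hd. rewrite Rabs_minus_sym in Hd. lra.
Qed.

Lemma cont_cos_lin t x0 : continuity_pt (fun x => cos (t * x)) x0.
Proof.
  apply derivable_continuous_pt. exists (t * - sin (t * x0)).
  apply is_derive_Reals. apply (isd_lin cos). apply is_derive_cos.
Qed.
Lemma cont_sin_lin t x0 : continuity_pt (fun x => sin (t * x)) x0.
Proof.
  apply derivable_continuous_pt. exists (t * cos (t * x0)).
  apply is_derive_Reals. apply (isd_lin sin). apply is_derive_sin.
Qed.

Lemma near_ne1 t x0 : ce (t * x0) <> RtoC 1 -> locally x0 (fun x => ce (t * x) <> RtoC 1).
Proof.
  intros H.
  destruct (Req_dec (cos (t * x0)) 1) as [Hc|Hc].
  - assert (Hs : sin (t * x0) <> 0).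
    { intros Hs. apply H. unfold ce. rewrite Hc, Hs. auto. }
    eapply filter_imp; [|apply (locally_ne _ _ 0 (cont_sin_lin t x0) Hs)].
    intros x Hx He. apply Hx. unfold ce in He. injection He; auto.
  - eapply filter_imp; [|apply (locally_ne _ _ 1 (cont_cos_lin t x0) Hc)].
    intros x Hx He. apply Hx. unfold ce in He. injection He; auto.
Qed.

Definition eta (t : R) (m : nat) (x : R) : C := Cmult (RtoC (t ^ m)) (phi m (t * x)).

Lemma CD_eta t m x : ce (t * x) <> RtoC 1 -> CD (eta t m) x (Cmult Ci (eta t (S m) x)).
Proof.
  intros H. unfold eta.
  eapply CD_val; [|apply CD_mult; [apply CD_const|apply (CD_lin (phi m)); apply CD_phi; auto]].
  simpl pow. rewrite RtoC_mult. ring.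
Qed.

Definition Dom (n : nat) (t : R) (th : nat -> R) := forall k, (k < n)%nat -> ce (t * th k) <> RtoC 1.

Definition Prodf (n : nat) (t : R) (ms : nat -> nat) (th : nat -> R) : C :=
  Cprod_lt n (fun k => eta t (ms k) (th k)).

Lemma Prodf_ext n t ms ms' th : (forall k, (k < n)%nat -> ms k = ms' k) -> Prodf n t ms th = Prodf n t ms' th.
Proof. intros H. unfold Prodf. apply Cprod_lt_ext. intros; rewrite H; auto. Qed.

Lemma Dpart_prod n t j g ms : (j < n)%nat ->
  (forall th, Dom n t th -> g th = Prodf n t ms th) ->
  forall th, Dom n t th ->
    Dpart j g th = Prodf n t (fun k => if Nat.eqb k j then S (ms j) else ms k) th.
Proof.
  intros Hj Hg th Hth.
  destruct (Cprod_lt_upd n (fun k => eta t (ms k) (th k)) j Hj) as [K HK].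
  assert (Hloc : locally (th j) (fun x => Cmult (eta t (ms j) x) K = g (upd th j x))).
  { eapply filter_imp; [|apply near_ne1; apply Hth; auto].
    intros x Hx. rewrite Hg.
    - unfold Prodf. rewrite <- HK. apply Cprod_lt_ext. intros k Hk. unfold upd.
      destruct (Nat.eqb_spec k j); subst; auto.
    - intros k Hk. unfold upd. destruct (Nat.eqb_spec k j); subst; auto. }
  assert (HCD : CD (fun x => g (upd th j x)) (th j) (Cmult (Cmult Ci (eta t (S (ms j)) (th j))) K)).
  { eapply CD_ext_loc; [exact Hloc|].
    eapply CD_val; [|apply CD_mult; [apply CD_eta; apply Hth; auto|apply CD_const]]. cbv beta. ring. }
  unfold Dpart. rewrite (CD_derive_fst _ _ _ HCD), (CD_derive_snd _ _ _ HCD).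
  replace (fst (Cmult (Cmult Ci (eta t (S (ms j)) (th j))) K), snd (Cmult (Cmult Ci (eta t (S (ms j)) (th j))) K))
    with (Cmult (Cmult Ci (eta t (S (ms j)) (th j))) K) by (destruct (Cmult _ _); auto).
  unfold Prodf. rewrite (Cprod_lt_ext n _ (fun k => if Nat.eqb k j then eta t (S (ms j)) (th j) else eta t (ms k) (th k))).
  - rewrite HK. apply C_ext; simpl; ring.
  - intros k Hk. destruct (Nat.eqb_spec k j); subst; auto.
Qed.

Lemma iter_Dpart n t j g ms : (j < n)%nat ->
  (forall th, Dom n t th -> g th = Prodf n t ms th) ->
  forall a th, Dom n t th ->
    iter_op a (Dpart j) g th = Prodf n t (fun k => if Nat.eqb k j then (ms j + a)%nat else ms k) th.
Proof.
  intros Hj Hg a. induction a as [|a IHa]; intros th Hth.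
  - simpl. rewrite Hg; auto. apply Prodf_ext. intros k _. destruct (Nat.eqb_spec k j); subst; auto; lia.
  - simpl iter_op. rewrite (Dpart_prod n t j _ _ Hj IHa th Hth). apply Prodf_ext. intros k _.
    destruct (Nat.eqb_spec k j); subst; auto. rewrite Nat.eqb_refl. lia.
Qed.

Lemma Dmulti_from_prod n t r : forall j g ms, (j + length r <= n)%nat ->
  (forall th, Dom n t th -> g th = Prodf n t ms th) ->
  forall th, Dom n t th ->
    Dmulti_from j r g th = Prodf n t (fun k => (ms k + if Nat.leb j k then nth (k - j) r 0 else 0)%nat) th.
Proof.
  induction r as [|a r IH]; intros j g ms Hlen Hg th Hth.
  - simpl. rewrite Hg; auto. apply Prodf_ext. intros k _. destruct (Nat.leb j k); destruct (k - j)%nat; simpl; lia.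
  - simpl Dmulti_from. simpl length in Hlen.
    rewrite (iter_Dpart n t j _ (fun k => (ms k + if Nat.leb (S j) k then nth (k - S j) r 0 else 0)%nat)); auto.
    + apply Prodf_ext. intros k _.
      destruct (Nat.eqb_spec k j).
      * subst. rewrite Nat.leb_refl. replace (Nat.leb (S j) j) with false by (symmetry; apply Nat.leb_gt; lia).
        rewrite Nat.sub_diag. simpl. lia.
      * destruct (Nat.leb_spec (S j) k); destruct (Nat.leb_spec j k); try lia.
        replace (k - j)%nat with (S (k - S j)) by lia. simpl. auto. auto.
    + lia.
    + intros th' Hth'. apply IH; auto. lia.
Qed.

Lemma Rsum_scal n c f : c * Rsum_lt n f = Rsum_lt n (fun j => c * f j).
Proof.
  revert f; induction n; intros f. rewrite !Rsum_lt_0; ring.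
  rewrite !Rsum_lt_S, <- IHn. ring.
Qed.

Lemma Cprod_nz n f : (forall j, (j < n)%nat -> f j <> RtoC 0) -> Cprod_lt n f <> RtoC 0.
Proof.
  revert f; induction n; intros f H.
  - rewrite Cprod_lt_0. intros E. injection E. lra.
  - rewrite Cprod_lt_S. apply Cmult_neq_0.
    + apply (H 0%nat); lia.
    + apply (IHn (fun j => f (S j))); auto. intros; apply H; lia.
Qed.

Lemma Cdiv_prod n a b : (forall j, (j < n)%nat -> b j <> RtoC 0) ->
  Cdiv (Cprod_lt n a) (Cprod_lt n b) = Cprod_lt n (fun j => Cdiv (a j) (b j)).
Proof.
  revert a b; induction n; intros a b H.
  - rewrite !Cprod_lt_0. field; try (intros E; injection E; lra).
  - rewrite !Cprod_lt_S. rewrite <- IHn by (intros; apply H; lia).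
    assert (H0 : b 0%nat <> RtoC 0) by (apply H; lia).
    assert (H1 : Cprod_lt n (fun j => b (S j)) <> RtoC 0) by (apply Cprod_nz; intros; apply H; lia).
    field. split; auto.
Qed.

Lemma one_minus_nz z : z <> RtoC 1 -> Cminus (RtoC 1) z <> RtoC 0.
Proof. intros H E. apply H. rewrite <- (Cplus_0_l z), <- E. ring. Qed.

Lemma Fmodel_prod n t th : Dom n t th -> Fmodel n t th = Prodf n t (fun _ => 0%nat) th.
Proof.
  intros Hth. unfold Fmodel, Prodf.
  rewrite Rsum_scal, <- Cprod_ce. rewrite Cdiv_prod.
  - apply Cprod_lt_ext. intros j Hj. unfold eta, phi. simpl pow.
    change (2 * 0 + 2)%nat with 2%nat. rewrite ev_Npol_0.
    replace (t / 2 * th j) with (t * th j / 2) by field. simpl Cpow. unfold Cdiv. ring.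
  - intros j Hj. apply one_minus_nz. apply Hth; auto.
Qed.

Lemma Dmulti_F n t r th : length r = n -> Dom n t th ->
  Dmulti r (Fmodel n t) th = Prodf n t (fun k => nth k r 0%nat) th.
Proof.
  intros Hl Hth. unfold Dmulti. rewrite (Dmulti_from_prod n t r 0 _ (fun _ => 0%nat)); auto.
  - apply Prodf_ext. intros k _. simpl. rewrite Nat.sub_0_r. auto.
  - lia.
  - intros; apply Fmodel_prod; auto.
Qed.

Lemma Cprod_tpow t r : forall n, length r = n ->
  Cprod_lt n (fun j => RtoC (t ^ nth j r 0%nat)) = RtoC (t ^ lsum r).
Proof.
  induction r as [|a r IH]; intros n Hl; simpl in Hl; subst.
  - rewrite Cprod_lt_0. simpl. auto.
  - rewrite Cprod_lt_S. simpl nth. rewrite (IH (length r)) by auto. simpl lsum.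
    rewrite pow_add, RtoC_mult. auto.
Qed.

Lemma Dmulti_F_u n t r u : length r = n -> Dom n t u ->
  Dmulti r (Fmodel n t) u = Cmult (RtoC (t ^ lsum r)) (Cprod_lt n (fun j => phi (nth j r 0%nat) (t * u j))).
Proof.
  intros Hl Hu. rewrite Dmulti_F; auto. unfold Prodf, eta.
  rewrite Cprod_lt_mult, Cprod_tpow; auto.
Qed.

Lemma NoDup_flat_map' {A B} (f : A -> list B) l :
  NoDup l -> (forall x, In x l -> NoDup (f x)) ->
  (forall x y z, In x l -> In y l -> In z (f x) -> In z (f y) -> x = y) ->
  NoDup (flat_map f l).
Proof.
  induction l as [|a l IH]; intros Hl Hf Hd; simpl. constructor.
  inversion Hl; subst. apply NoDup_app.
  - apply Hf; simpl; auto.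
  - apply IH; auto. intros; apply Hf; simpl; auto. intros; eapply Hd; simpl; eauto.
  - intros z Hz Hz'. apply in_flat_map in Hz'. destruct Hz' as [y [Hy Hzy]].
    assert (a = y) by (eapply Hd; simpl; eauto). subst. contradiction.
Qed.

Lemma NoDup_map_cons a (l : list (list nat)) : NoDup l -> NoDup (map (cons a) l).
Proof.
  induction l; intros H; simpl; constructor; inversion H; subst; auto.
  intros Hin. apply in_map_iff in Hin. destruct Hin as [x [E Hx]]. injection E; intros; subst; auto.
Qed.

Fixpoint box (n A : nat) : list (list nat) :=
  match n with
  | O => [[]]
  | S n' => flat_map (fun a => map (cons a) (box n' A)) (seq 0 A)
  end.

Lemma box_cons n A a al : (a < A)%nat -> In al (box n A) -> In (a :: al) (box (S n) A).
Proof.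
  intros Ha H. simpl. apply in_flat_map. exists a. split. apply in_seq; lia. apply in_map; auto.
Qed.

Lemma box_in n A al : In al (box n A) -> length al = n /\ forall j, (j < n)%nat -> (nth j al 0 < A)%nat.
Proof.
  revert al; induction n; intros al H; simpl in H.
  - destruct H as [<-|[]]. split; auto. intros; lia.
  - apply in_flat_map in H. destruct H as [a [Ha H]]. apply in_map_iff in H. destruct H as [al' [<- H]].
    apply in_seq in Ha. destruct (IHn al' H) as [H1 H2]. split. simpl; auto.
    intros j Hj. destruct j; simpl. lia. apply H2; lia.
Qed.

Lemma box_NoDup n A : NoDup (box n A).
Proof.
  induction n; simpl. constructor; auto. constructor.
  apply NoDup_flat_map'. apply seq_NoDup. intros; apply NoDup_map_cons; auto.
  intros x y z _ _ Hx Hy. apply in_map_iff in Hx, Hy. destruct Hx as [? [<- _]]. destruct Hy as [? [E _]].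
  injection E; auto.
Qed.

Lemma multi_in n : forall d r, In r (multi n d) -> length r = n /\ lsum r = d.
Proof.
  induction n; intros d r H.
  - destruct d; simpl in H; [destruct H as [<-|[]]; auto|contradiction].
  - change (In r (flat_map (fun a => map (cons a) (multi n (d - a))) (seq 0 (S d)))) in H.
    apply in_flat_map in H. destruct H as [a [Ha H]]. apply in_map_iff in H. destruct H as [r' [<- H]].
    apply in_seq in Ha. destruct (IHn _ _ H) as [H1 H2]. simpl. split; auto. lia.
Qed.

Lemma multi_NoDup n : forall d, NoDup (multi n d).
Proof.
  induction n; intros d.
  - destruct d; simpl; repeat constructor; auto.
  - change (NoDup (flat_map (fun a => map (cons a) (multi n (d - a))) (seq 0 (S d)))).
    apply NoDup_flat_map'. apply seq_NoDup. intros; apply NoDup_map_cons; auto.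
    intros x y z _ _ Hx Hy. apply in_map_iff in Hx, Hy. destruct Hx as [? [<- _]]. destruct Hy as [? [E _]].
    injection E; auto.
Qed.

Lemma nth_le_lsum r j : (nth j r 0 <= lsum r)%nat.
Proof.
  revert j; induction r; intros j; destruct j; simpl; try lia. specialize (IHr j). lia.
Qed.

Lemma in_le_lsum l x : In x l -> (x <= lsum l)%nat.
Proof. induction l; simpl; intros H. contradiction. destruct H; subst; [lia|]. specialize (IHl H); lia. Qed.

Lemma in_lt_lsum l x : In x l -> (2 <= length l)%nat -> (forall y, In y l -> (1 <= y)%nat) -> (x < lsum l)%nat.
Proof.
  destruct l as [|a l]; simpl; intros Hx Hl Hy. contradiction.
  destruct l as [|b l]; simpl in Hl. lia.
  destruct Hx as [<-|Hx].
  - assert (1 <= b)%nat by (apply Hy; simpl; auto). simpl. lia.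
  - assert (1 <= a)%nat by (apply Hy; simpl; auto). pose proof (in_le_lsum _ _ Hx). simpl in *. lia.
Qed.

Lemma multi_1_aux s l : (forall a, In a l -> (a < s)%nat) ->
  flat_map (fun a => map (cons a) (multi 0 (s - a))) l = [].
Proof.
  induction l as [|a l IH]; intros H; simpl; auto.
  assert (a < s)%nat by (apply H; simpl; auto).
  destruct (s - a)%nat eqn:E; [lia|]. simpl. apply IH. intros; apply H; simpl; auto.
Qed.

Lemma multi_1 s : multi 1 s = [[s]].
Proof.
  change (multi 1 s) with (flat_map (fun a => map (cons a) (multi 0 (s - a))) (seq 0 (S s))).
  rewrite seq_S, flat_map_app. rewrite multi_1_aux by (intros a Ha; apply in_seq in Ha; lia).
  simpl. replace (s - s)%nat with 0%nat by lia. auto.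
Qed.

Lemma Csum_map_cons {A} (f : A -> C) a l : Csum (map f (a :: l)) = Cplus (f a) (Csum (map f l)).
Proof. reflexivity. Qed.

Lemma Cmult_reg_r (a d : C) : d <> RtoC 0 -> Cmult a d = RtoC 0 -> a = RtoC 0.
Proof.
  intros Hd H. replace a with (Cmult (Cmult a d) (Cinv d)) by (field; auto).
  rewrite H. ring.
Qed.

Lemma vandermonde {X} (L : list X) : forall (Cf ω : X -> C),
  NoDup L ->
  (forall x y, In x L -> In y L -> ω x = ω y -> x = y) ->
  (forall x, In x L -> ω x <> RtoC 0) ->
  (forall m, (1 <= m <= length L)%nat -> Csum (map (fun x => Cmult (Cf x) (Cpow (ω x) m)) L) = RtoC 0) ->
  forall x, In x L -> Cf x = RtoC 0.
Proof.
  induction L as [|x0 L IH]; intros Cf ω Hnd Hinj Hnz Hs x Hx. contradiction.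
  inversion Hnd as [|? ? Hx0 HndL]; subst.
  assert (HL : forall x, In x L -> Cf x = RtoC 0).
  { assert (H' : forall x, In x L -> Cmult (Cf x) (Cminus (ω x) (ω x0)) = RtoC 0).
    { apply (IH (fun x => Cmult (Cf x) (Cminus (ω x) (ω x0))) ω); auto.
      - intros; apply Hinj; simpl; auto.
      - intros; apply Hnz; simpl; auto.
      - intros m Hm.
        assert (E1 := Hs (S m) ltac:(simpl; lia)). assert (E2 := Hs m ltac:(simpl; lia)).
        rewrite !Csum_map_cons in E1, E2.
        transitivity (Cminus (Csum (map (fun x => Cmult (Cf x) (Cpow (ω x) (S m))) L))
                             (Cmult (ω x0) (Csum (map (fun x => Cmult (Cf x) (Cpow (ω x) m)) L)))).
        { rewrite <- Csum_map_scal, <- Csum_map_minus. apply Csum_map_ext_in; intros; simpl; ring. }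
        transitivity (Cminus (Cplus (Cmult (Cf x0) (Cpow (ω x0) (S m))) (Csum (map (fun x => Cmult (Cf x) (Cpow (ω x) (S m))) L)))
                     (Cmult (ω x0) (Cplus (Cmult (Cf x0) (Cpow (ω x0) m)) (Csum (map (fun x => Cmult (Cf x) (Cpow (ω x) m)) L))))).
        { replace (Cpow (ω x0) (S m)) with (Cmult (ω x0) (Cpow (ω x0) m)) by reflexivity.
          set (S1 := Csum (map (fun x1 => Cmult (Cf x1) (Cpow (ω x1) (S m))) L)).
          set (S2 := Csum (map (fun x1 => Cmult (Cf x1) (Cpow (ω x1) m)) L)).
          set (P := Cpow (ω x0) m). ring. }
        rewrite E1, E2. ring. }
    intros y Hy. apply (Cmult_reg_r _ (Cminus (ω y) (ω x0))); auto.
    intros E. apply Hx0. replace x0 with y; auto. apply Hinj; simpl; auto.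
    replace (ω y) with (Cplus (Cminus (ω y) (ω x0)) (ω x0)) by ring. rewrite E. ring. }
  destruct Hx as [<-|Hx]; auto.
  assert (E1 := Hs 1%nat ltac:(simpl; lia)). rewrite Csum_map_cons in E1.
  rewrite (Csum_map_zero _ L) in E1 by (intros; rewrite HL; auto; ring).
  apply (Cmult_reg_r _ (ω x0)). apply Hnz; simpl; auto.
  rewrite <- E1. simpl. ring.
Qed.

Lemma Csum_indicator x v l : NoDup l -> In x l ->
  Csum (map (fun m => if Nat.eqb x m then v else RtoC 0) l) = v.
Proof.
  induction l as [|a l IH]; intros Hnd Hx. contradiction.
  inversion Hnd; subst. rewrite Csum_map_cons. destruct Hx as [<-|Hx].
  - rewrite Nat.eqb_refl. rewrite Csum_map_zero. ring.
    intros y Hy. destruct (Nat.eqb_spec a y); subst; auto. contradiction.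
  - destruct (Nat.eqb_spec x a). subst; contradiction. rewrite IH; auto. ring.
Qed.

Lemma regroup (L : list (list nat)) (g : list nat -> C) K :
  (forall r, In r L -> (hd 0%nat r <= K)%nat) ->
  Csum (map g L) = Csum (map (fun m => Csum (map g (filter (fun r => Nat.eqb (hd 0%nat r) m) L))) (seq 0 (S K))).
Proof.
  induction L as [|r L IH]; intros H.
  - symmetry. apply Csum_map_zero. intros; simpl; auto.
  - rewrite Csum_map_cons, IH by (intros; apply H; simpl; auto).
    transitivity (Cplus (Csum (map (fun m => if Nat.eqb (hd 0%nat r) m then g r else RtoC 0) (seq 0 (S K))))
                        (Csum (map (fun m => Csum (map g (filter (fun r => Nat.eqb (hd 0%nat r) m) L))) (seq 0 (S K))))).
    + rewrite Csum_indicator; auto. apply seq_NoDup. apply in_seq. assert (hd 0%nat r <= K)%nat by (apply H; simpl; auto). lia.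
    + rewrite <- Csum_map_plus. apply Csum_map_ext_in. intros m _. simpl filter.
      destruct (Nat.eqb (hd 0%nat r) m); simpl; ring.
Qed.

Lemma NoDup_map_inj' {A B} (f : A -> B) l : NoDup l ->
  (forall x y, In x l -> In y l -> f x = f y -> x = y) -> NoDup (map f l).
Proof.
  induction l as [|a l IH]; intros Hnd Hinj; simpl; constructor.
  - intros Hin. apply in_map_iff in Hin. destruct Hin as [x [E Hx]].
    inversion Hnd; subst. assert (x = a) by (apply Hinj; simpl; auto). subst; contradiction.
  - inversion Hnd; apply IH; auto. intros; apply Hinj; simpl; auto.
Qed.

Lemma nth_S_tl (r : list nat) j : nth (S j) r 0%nat = nth j (tl r) 0%nat.
Proof. destruct r; simpl; auto. destruct j; auto. Qed.

Lemma tensor (p : nat -> nat -> R) K A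
  (Hrow : forall beta : nat -> C,
     (forall a, (a < A)%nat -> Csum (map (fun m => Cmult (beta m) (RtoC (p m a))) (seq 0 (S K))) = RtoC 0) ->
     forall m, (m <= K)%nat -> beta m = RtoC 0) :
  forall n L (b : list nat -> C), NoDup L ->
  (forall r, In r L -> length r = n /\ forall j, (nth j r 0 <= K)%nat) ->
  (forall al, In al (box n A) ->
     Csum (map (fun r => Cmult (b r) (Cprod_lt n (fun j => RtoC (p (nth j r 0%nat) (nth j al 0%nat))))) L) = RtoC 0) ->
  forall r, In r L -> b r = RtoC 0.
Proof.
  induction n as [|n IH]; intros L b Hnd HL Hs r0 Hr0.
  - assert (Hs0 := Hs [] ltac:(simpl; auto)).
    destruct L as [|r1 [|r2 L]]. contradiction.
    + destruct Hr0 as [<-|[]]. simpl in Hs0. rewrite Cprod_lt_0 in Hs0. rewrite <- Hs0. ring.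
    + exfalso. assert (length r1 = 0%nat) by (apply HL; simpl; auto).
      assert (length r2 = 0%nat) by (apply HL; simpl; auto).
      destruct r1, r2; simpl in *; try lia. inversion Hnd; subst. apply H3; simpl; auto.
  - set (m0 := hd 0%nat r0).
    set (Lm := fun m => filter (fun r => Nat.eqb (hd 0%nat r) m) L).
    set (beta := fun al m => Csum (map (fun r => Cmult (b r) (Cprod_lt n (fun j => RtoC (p (nth j (tl r) 0%nat) (nth j al 0%nat))))) (Lm m))).
    assert (Hhd : forall r, In r L -> (hd 0%nat r <= K)%nat).
    { intros r Hr. destruct (HL r Hr) as [_ H]. specialize (H 0%nat). destruct r; simpl in *; lia. }
    assert (Hbeta : forall al, In al (box n A) -> forall m, (m <= K)%nat -> beta al m = RtoC 0).
    { intros al Hal. apply Hrow. intros a Ha.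
      assert (E := Hs (a :: al) (box_cons _ _ _ _ Ha Hal)).
      rewrite (regroup _ _ K Hhd) in E. rewrite <- E. apply Csum_map_ext_in. intros m _.
      unfold beta, Lm. rewrite Cmult_comm, <- Csum_map_scal. apply Csum_map_ext_in. intros r Hr.
      apply filter_In in Hr. destruct Hr as [_ Hm]. apply Nat.eqb_eq in Hm.
      rewrite Cprod_lt_S.
      rewrite (Cprod_lt_ext n (fun j => RtoC (p (nth (S j) r 0%nat) (nth (S j) (a :: al) 0%nat)))
                 (fun j => RtoC (p (nth j (tl r) 0%nat) (nth j al 0%nat)))) by (intros; rewrite nth_S_tl; auto).
      replace (nth 0 r 0%nat) with m by (rewrite <- Hm; destruct r; auto).
      change (nth 0 (a :: al) 0%nat) with a. ring. }
    assert (Hr0m : In r0 (Lm m0)). { unfold Lm. apply filter_In. split; auto. apply Nat.eqb_refl. }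
    assert (Hcons : forall r, In r (Lm m0) -> r = m0 :: tl r).
    { intros r Hr. unfold Lm in Hr. apply filter_In in Hr. destruct Hr as [Hr Hm]. apply Nat.eqb_eq in Hm.
      destruct (HL r Hr) as [Hl _]. destruct r; simpl in *. lia. subst; auto. }
    assert (IH' := IH (map (@tl nat) (Lm m0)) (fun r' => b (m0 :: r'))).
    rewrite (Hcons r0 Hr0m). apply IH'.
    + apply NoDup_map_inj'. unfold Lm. apply NoDup_filter; auto.
      intros x y Hx Hy E. rewrite (Hcons x Hx), (Hcons y Hy), E. auto.
    + intros r' Hr'. apply in_map_iff in Hr'. destruct Hr' as [r [<- Hr]].
      assert (HrL : In r L) by (unfold Lm in Hr; apply filter_In in Hr; tauto).
      destruct (HL r HrL) as [Hl Hb]. split.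
      * destruct r; simpl in *; lia.
      * intros j. rewrite <- nth_S_tl. apply Hb.
    + intros al Hal. rewrite map_map. rewrite <- (Hbeta al Hal m0) by (apply Hhd; auto).
      unfold beta. apply Csum_map_ext_in. intros r Hr. rewrite <- (Hcons r Hr). auto.
    + apply in_map. auto.
Qed.

Lemma Rsum_lt_Sr n f : Rsum_lt (S n) f = Rsum_lt n f + f n.
Proof.
  unfold Rsum_lt. rewrite seq_S, map_app, fold_right_app. simpl.
  generalize (f n). induction (map f (seq 0 n)); simpl; intros; [ring|]. rewrite IHl. ring.
Qed.

Lemma Rsum_plus n f g : Rsum_lt n (fun j => f j + g j) = Rsum_lt n f + Rsum_lt n g.
Proof.
  revert f g; induction n; intros f g. rewrite !Rsum_lt_0; ring.
  rewrite !Rsum_lt_S, IHn. ring.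
Qed.

Lemma Rsum_zero n f : (forall j, (j < n)%nat -> f j = 0) -> Rsum_lt n f = 0.
Proof.
  revert f; induction n; intros f H. apply Rsum_lt_0.
  rewrite Rsum_lt_S, IHn by (intros; apply H; lia). rewrite H by lia. ring.
Qed.

Lemma Rsum_swap N M (f : nat -> nat -> R) :
  Rsum_lt N (fun i => Rsum_lt M (fun j => f i j)) = Rsum_lt M (fun j => Rsum_lt N (fun i => f i j)).
Proof.
  revert f; induction N; intros f.
  - rewrite Rsum_lt_0. symmetry. apply Rsum_zero. intros; apply Rsum_lt_0.
  - rewrite Rsum_lt_S, IHN. rewrite (Rsum_lt_ext M (fun j => Rsum_lt (S N) (fun i => f i j))
                                              (fun j => f 0%nat j + Rsum_lt N (fun i => f (S i) j))).
    rewrite Rsum_plus. auto. intros; apply Rsum_lt_S.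
Qed.

Lemma Rsum_ext_bound N N' f : (N <= N')%nat -> (forall j, (N <= j < N')%nat -> f j = 0) ->
  Rsum_lt N' f = Rsum_lt N f.
Proof.
  intros Hle H. induction N' as [|N' IH].
  - replace N with 0%nat by lia. auto.
  - destruct (Nat.eq_dec N (S N')) as [->|Hne]; auto.
    rewrite Rsum_lt_Sr, IH by (try lia; intros; apply H; lia). rewrite H by lia. ring.
Qed.

Lemma cpt_plus (f g : R -> R) x : continuity_pt f x -> continuity_pt g x -> continuity_pt (fun w => f w + g w) x.
Proof. intros H1 H2. exact (continuity_pt_plus f g x H1 H2). Qed.
Lemma cpt_mult (f g : R -> R) x : continuity_pt f x -> continuity_pt g x -> continuity_pt (fun w => f w * g w) x.
Proof. intros H1 H2. exact (continuity_pt_mult f g x H1 H2). Qed.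
Lemma cpt_const c x : continuity_pt (fun _ => c) x.
Proof. apply continuity_pt_const. intros ? ?; auto. Qed.
Lemma cpt_id x : continuity_pt (fun w => w) x.
Proof. apply continuity_pt_id. Qed.
Lemma cpt_pow (f : R -> R) k x : continuity_pt f x -> continuity_pt (fun w => f w ^ k) x.
Proof. intros H. induction k. simpl. apply cpt_const. simpl. apply cpt_mult; auto. Qed.
Lemma cpt_sum N (h : nat -> R -> R) x : (forall m, (m < N)%nat -> continuity_pt (h m) x) ->
  continuity_pt (fun w => Rsum_lt N (fun m => h m w)) x.
Proof.
  revert h; induction N; intros h H.
  - apply (continuity_pt_locally_ext (fun _ => 0) _ 1). lra. intros; reflexivity. apply cpt_const.
  - apply (continuity_pt_locally_ext (fun w => h 0%nat w + Rsum_lt N (fun m => h (S m) w)) _ 1). lra.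
    intros; symmetry; apply Rsum_lt_S.
    apply cpt_plus. apply H; lia. apply (IHN (fun m => h (S m))). intros; apply H; lia.
Qed.

Definition mul1mw2 (P : nat -> R) (a : nat) : R := P a - shift2 P a.
Fixpoint iterM (k : nat) (P : nat -> R) : nat -> R :=
  match k with O => P | S k' => mul1mw2 (iterM k' P) end.
Definition Qpol (K m : nat) : nat -> R := iterM (K - m) (Npol m).

Lemma supp_mul P B : supp P B -> supp (mul1mw2 P) (S (S B)).
Proof. intros H a Ha. unfold mul1mw2. rewrite H by lia. rewrite (supp_shift2 P B H) by lia. ring. Qed.

Lemma ev_mul P B w : supp P B -> ev (mul1mw2 P) (S (S B)) w = Cmult (Cminus (RtoC 1) (Cpow w 2)) (ev P B w).
Proof.
  intros H. unfold mul1mw2. rewrite ev_minus, ev_shift2. rewrite (ev_ext_bound P B) by (auto; lia). ring.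
Qed.

Lemma ev_iterM P B w : supp P B -> forall k,
  supp (iterM k P) (B + 2 * k) /\ ev (iterM k P) (B + 2 * k) w = Cmult (Cpow (Cminus (RtoC 1) (Cpow w 2)) k) (ev P B w).
Proof.
  intros H k. induction k as [|k [IH1 IH2]].
  - simpl. rewrite Nat.add_0_r. split; auto. ring.
  - replace (B + 2 * S k)%nat with (S (S (B + 2 * k))) by lia. simpl iterM. split.
    + apply supp_mul; auto.
    + rewrite ev_mul by auto. rewrite IH2. simpl Cpow. ring.
Qed.

Lemma supp_Qpol K m : (m <= K)%nat -> supp (Qpol K m) (2 * K + 2).
Proof.
  intros H. unfold Qpol. replace (2 * K + 2)%nat with (2 * m + 2 + 2 * (K - m))%nat by lia.
  apply (ev_iterM _ _ (RtoC 0) (supp_Npol m)).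
Qed.

Lemma ev_Qpol K m w : (m <= K)%nat ->
  ev (Qpol K m) (2 * K + 2) w = Cmult (Cpow (Cminus (RtoC 1) (Cpow w 2)) (K - m)) (ev (Npol m) (2 * m + 2) w).
Proof.
  intros H. unfold Qpol. replace (2 * K + 2)%nat with (2 * m + 2 + 2 * (K - m))%nat by lia.
  apply (ev_iterM _ _ w (supp_Npol m)).
Qed.

Definition evR (P : nat -> R) (B : nat) (w : R) : R := Rsum_lt B (fun a => P a * w ^ a).

Lemma Cpow_RtoC w a : Cpow (RtoC w) a = RtoC (w ^ a).
Proof. induction a; simpl; auto. rewrite IHa, RtoC_mult. auto. Qed.

Lemma Csum_RtoC (f : nat -> R) l : Csum (map (fun a => RtoC (f a)) l) = RtoC (fold_right Rplus 0 (map f l)).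
Proof. induction l; simpl; auto. rewrite IHl, RtoC_plus. auto. Qed.

Lemma ev_RtoC P B w : ev P B (RtoC w) = RtoC (evR P B w).
Proof.
  unfold ev, evR, Rsum_lt. rewrite <- Csum_RtoC. f_equal. apply map_ext. intros a.
  rewrite Cpow_RtoC, RtoC_mult. auto.
Qed.

Lemma RtoC_inj x y : RtoC x = RtoC y -> x = y.
Proof. intros H. injection H; auto. Qed.

Lemma evR_Qpol K m w : (m <= K)%nat ->
  evR (Qpol K m) (2 * K + 2) w = (1 - w ^ 2) ^ (K - m) * evR (Npol m) (2 * m + 2) w.
Proof.
  intros H. apply RtoC_inj. rewrite <- ev_RtoC, ev_Qpol by auto. rewrite ev_RtoC, !Cpow_RtoC.
  rewrite RtoC_mult. f_equal. rewrite <- (Cpow_RtoC (1 - w ^ 2)), RtoC_minus. auto.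
Qed.

Lemma evR_Npol_1 m : evR (Npol m) (2 * m + 2) 1 <> 0.
Proof.
  induction m.
  - replace (evR (Npol 0) (2 * 0 + 2) 1) with 1. lra.
    apply RtoC_inj. rewrite <- ev_RtoC. change (2 * 0 + 2)%nat with 2%nat. rewrite ev_Npol_0. auto.
  - replace (evR (Npol (S m)) (2 * S m + 2) 1) with (INR (S m) * evR (Npol m) (2 * m + 2) 1).
    apply Rmult_integral_contrapositive_currified; auto. apply not_0_INR. lia.
    apply RtoC_inj. rewrite <- ev_RtoC, ev_Npol_S, !ev_RtoC. rewrite RtoC_mult. simpl Cpow.
    apply C_ext; simpl; ring.
Qed.

Lemma cpt_evR P B x : continuity_pt (fun w => evR P B w) x.
Proof.
  unfold evR. apply (cpt_sum B (fun a w => P a * w ^ a)). intros. apply cpt_mult. apply cpt_const. apply cpt_pow, cpt_id.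
Qed.

Lemma row_indep_R K (beta : nat -> R) :
  (forall a, (a < 2 * K + 2)%nat -> Rsum_lt (S K) (fun m => beta m * Qpol K m a) = 0) ->
  forall m, (m <= K)%nat -> beta m = 0.
Proof.
  intros Hb.
  assert (Hw : forall w, Rsum_lt (S K) (fun m => beta m * evR (Qpol K m) (2 * K + 2) w) = 0).
  { intros w. unfold evR.
    rewrite (Rsum_lt_ext (S K) _ (fun m => Rsum_lt (2 * K + 2) (fun a => beta m * Qpol K m a * w ^ a))).
    rewrite Rsum_swap. apply Rsum_zero. intros a Ha.
    rewrite (Rsum_lt_ext (S K) _ (fun m => w ^ a * (beta m * Qpol K m a))) by (intros; ring).
    rewrite <- Rsum_scal, Hb by auto. ring.
    intros m _. rewrite Rsum_scal. apply Rsum_lt_ext. intros; ring. }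
  assert (Hdown : forall i, (i <= K)%nat -> (forall m, (K - i < m <= K)%nat -> beta m = 0) -> beta (K - i)%nat = 0).
  { intros i Hi Hgt. set (M := (K - i)%nat).
    set (G := fun w => Rsum_lt (S M) (fun m => beta m * ((1 - w ^ 2) ^ (M - m) * evR (Npol m) (2 * m + 2) w))).
    assert (HG : forall w, 1 < w -> G w = 0).
    { intros w Hw1.
      assert (Hne : (1 - w ^ 2) ^ (K - M) <> 0) by (apply pow_nonzero; nra).
      apply (Rmult_eq_reg_l ((1 - w ^ 2) ^ (K - M))); auto. rewrite Rmult_0_r.
      rewrite <- (Hw w). unfold G. rewrite Rsum_scal.
      rewrite (Rsum_ext_bound (S M) (S K)); [|lia|].
      - apply Rsum_lt_ext. intros m Hm. rewrite evR_Qpol by lia.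
        replace (K - m)%nat with (K - M + (M - m))%nat by lia. rewrite pow_add. ring.
      - intros j Hj. rewrite Hgt by lia. ring. }
    assert (HG1 : G 1 = 0).
    { assert (Hc : continuity_pt G 1).
      { unfold G. apply (cpt_sum (S M) (fun m w => beta m * ((1 - w ^ 2) ^ (M - m) * evR (Npol m) (2 * m + 2) w))).
        intros m _. apply cpt_mult. apply cpt_const. apply cpt_mult. apply cpt_pow.
        apply cpt_plus. apply cpt_const. apply (continuity_pt_opp (fun w => w ^ 2)). apply cpt_pow, cpt_id.
        apply cpt_evR. }
      destruct (Req_dec (G 1) 0) as [E|E]; auto. exfalso.
      assert (He : Rabs (G 1) > 0) by (apply Rabs_pos_lt; auto).
      destruct (Hc _ He) as [alp [Ha H]].
      assert (Hd : R_dist (G (1 + alp / 2)) (G 1) < Rabs (G 1)).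
      { apply H. split. split; [constructor|lra].
        change (dist R_met (1 + alp / 2) 1) with (R_dist (1 + alp / 2) 1). unfold R_dist.
        replace (1 + alp / 2 - 1) with (alp / 2) by ring. rewrite Rabs_right; lra. }
      rewrite HG in Hd by lra. unfold R_dist in Hd. rewrite Rminus_0_l, Rabs_Ropp in Hd. lra. }
    unfold G in HG1. rewrite Rsum_lt_Sr in HG1.
    rewrite Rsum_zero in HG1.
    - rewrite Nat.sub_diag in HG1. simpl pow in HG1 at 2.
      assert (HN := evR_Npol_1 M).
      apply (Rmult_eq_reg_r (evR (Npol M) (2 * M + 2) 1)); auto. rewrite Rmult_0_l. rewrite <- HG1. ring.
    - intros j Hj. replace (M - j)%nat with (S (M - j - 1)) by lia. simpl. ring. }
  assert (Hall : forall i, (i <= K)%nat -> forall m, (K - i <= m <= K)%nat -> beta m = 0).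
  { induction i; intros Hi m Hm.
    - replace m with (K - 0)%nat by lia. apply Hdown; auto. intros; lia.
    - destruct (Nat.eq_dec m (K - S i)) as [->|Hne].
      + apply Hdown; auto. intros m' Hm'. apply IHi; lia.
      + apply IHi; lia. }
  intros m Hm. apply (Hall K); lia.
Qed.

Lemma row_indep_C K (beta : nat -> C) :
  (forall a, (a < 2 * K + 2)%nat -> Csum (map (fun m => Cmult (beta m) (RtoC (Qpol K m a))) (seq 0 (S K))) = RtoC 0) ->
  forall m, (m <= K)%nat -> beta m = RtoC 0.
Proof.
  intros H m Hm.
  assert (Hfst : forall l (f : nat -> C), fst (Csum (map f l)) = fold_right Rplus 0 (map (fun x => fst (f x)) l)).
  { induction l; intros f; simpl; auto. rewrite IHl. auto. }
  assert (Hsnd : forall l (f : nat -> C), snd (Csum (map f l)) = fold_right Rplus 0 (map (fun x => snd (f x)) l)).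
  { induction l; intros f; simpl; auto. rewrite IHl. auto. }
  apply C_ext; simpl.
  - apply (row_indep_R K (fun m => fst (beta m))); auto. intros a Ha.
    specialize (H a Ha). apply (f_equal fst) in H. rewrite Hfst in H. change (fst (RtoC 0)) with 0 in H. rewrite <- H.
    unfold Rsum_lt. f_equal. apply map_ext. intros x. simpl. ring.
  - apply (row_indep_R K (fun m => snd (beta m))); auto. intros a Ha.
    specialize (H a Ha). apply (f_equal snd) in H. rewrite Hsnd in H. change (snd (RtoC 0)) with 0 in H. rewrite <- H.
    unfold Rsum_lt. f_equal. apply map_ext. intros x. simpl. ring.
Qed.

Lemma Csum_map_scal_r {A} (c : C) (f : A -> C) l :
  Csum (map (fun x => Cmult (f x) c) l) = Cmult (Csum (map f l)) c.
Proof. induction l; simpl. ring. rewrite IHl; ring. Qed.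

Lemma expand n A : forall (f : nat -> nat -> C),
  Cprod_lt n (fun j => Csum (map (f j) (seq 0 A))) =
  Csum (map (fun al => Cprod_lt n (fun j => f j (nth j al 0%nat))) (box n A)).
Proof.
  induction n; intros f.
  - rewrite Cprod_lt_0. simpl. rewrite Cprod_lt_0. ring.
  - rewrite Cprod_lt_S. rewrite (IHn (fun j => f (S j))).
    change (box (S n) A) with (flat_map (fun a => map (cons a) (box n A)) (seq 0 A)).
    rewrite Csum_flat_map. rewrite <- Csum_map_scal_r. apply Csum_map_ext_in. intros a _.
    rewrite map_map. rewrite <- Csum_map_scal. apply Csum_map_ext_in. intros al _.
    rewrite Cprod_lt_S. simpl nth. auto.
Qed.

Lemma Cpow_add z a b : Cpow z (a + b) = Cmult (Cpow z a) (Cpow z b).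
Proof. induction a; simpl. ring. rewrite IHa. ring. Qed.

Lemma Cpow_inv_mul z k : z <> RtoC 0 -> Cmult (Cpow (Cinv z) k) (Cpow z k) = RtoC 1.
Proof. intros H. induction k; simpl. ring. transitivity (Cmult (Cmult (Cinv z) z) (Cmult (Cpow (Cinv z) k) (Cpow z k))). ring.
  rewrite IHk, Cinv_l; auto. ring. Qed.

Lemma phi_Q K m y : (m <= K)%nat -> ce y <> RtoC 1 ->
  Cmult (phi m y) (Cpow (Cminus (RtoC 1) (ce y)) (S K)) = ev (Qpol K m) (2 * K + 2) (ce (y / 2)).
Proof.
  intros Hm Hy. rewrite ev_Qpol by auto. unfold phi.
  assert (HD := one_minus_nz _ Hy).
  replace (S K) with (S m + (K - m))%nat by lia. rewrite Cpow_add.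
  rewrite <- (ce_half y).
  transitivity (Cmult (Cmult (Cpow (Cinv (Cminus (RtoC 1) (ce y))) (S m)) (Cpow (Cminus (RtoC 1) (ce y)) (S m)))
                      (Cmult (Cpow (Cminus (RtoC 1) (ce y)) (K - m)) (ev (Npol m) (2 * m + 2) (ce (y / 2))))).
  ring. rewrite Cpow_inv_mul; auto. ring.
Qed.

Lemma Rsum_le n f g : (forall j, (j < n)%nat -> f j <= g j) -> Rsum_lt n f <= Rsum_lt n g.
Proof.
  revert f g; induction n; intros f g H. rewrite !Rsum_lt_0; lra.
  rewrite !Rsum_lt_S. assert (f 0%nat <= g 0%nat) by (apply H; lia).
  assert (Rsum_lt n (fun j => f (S j)) <= Rsum_lt n (fun j => g (S j))) by (apply IHn; intros; apply H; lia). lra.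
Qed.

Lemma Rsum_ge_term n f k : (forall j, (j < n)%nat -> 0 <= f j) -> (k < n)%nat -> f k <= Rsum_lt n f.
Proof.
  revert f k; induction n; intros f k H Hk. lia.
  rewrite Rsum_lt_S. destruct k.
  - pose proof (Rsum_le n (fun _ => 0) (fun j => f (S j)) ltac:(intros; apply H; lia)) as H0.
    rewrite Rsum_zero in H0 by auto. lra.
  - assert (f (S k) <= Rsum_lt n (fun j => f (S j))) by (apply (IHn (fun j => f (S j)) k); [intros; apply H; lia | lia]).
    assert (0 <= f 0%nat) by (apply H; lia). lra.
Qed.

Definition lam (n : nat) (u : nat -> R) (al : list nat) : R :=
  Rsum_lt n (fun j => INR (nth j al 0%nat) * (u j / 2)).

Lemma lam_inj n u al be : Q_lin_indep n u -> length al = n -> length be = n ->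
  lam n u al = lam n u be -> al = be.
Proof.
  intros Hind Ha Hb E.
  set (q := fun j => inject_Z (Z.of_nat (nth j al 0%nat) - Z.of_nat (nth j be 0%nat))).
  assert (Hq : forall j, Q2R (q j) = INR (nth j al 0%nat) - INR (nth j be 0%nat)).
  { intros j. unfold q, Q2R, inject_Z. simpl. rewrite minus_IZR, <- !INR_IZR_INZ. field. }
  assert (Hs : Rsum_lt n (fun j => Q2R (q j) * u j) = 0).
  { rewrite (Rsum_lt_ext n _ (fun j => 2 * (INR (nth j al 0%nat) * (u j / 2)) + (-2) * (INR (nth j be 0%nat) * (u j / 2)))).
    rewrite Rsum_plus, <- !Rsum_scal. unfold lam in E. rewrite E. ring.
    intros j _. rewrite Hq. field. }
  apply nth_ext with (d := 0%nat) (d' := 0%nat). lia.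
  intros j Hj. apply INR_eq. specialize (Hind q Hs j ltac:(lia)).
  apply Qeq_eqR in Hind. rewrite Hq in Hind. unfold Q2R in Hind. simpl in Hind. lra.
Qed.

Lemma lam_bound n u A al : (forall j, (j < n)%nat -> 0 < u j) -> In al (box n A) ->
  0 <= lam n u al <= INR A * Rsum_lt n u.
Proof.
  intros Hu Hal. destruct (box_in _ _ _ Hal) as [_ Hb]. unfold lam. split.
  - replace 0 with (Rsum_lt n (fun _ => 0)) by (apply Rsum_zero; auto).
    apply Rsum_le. intros j Hj. specialize (Hu j Hj). apply Rmult_le_pos. apply pos_INR. lra.
  - rewrite Rsum_scal. apply Rsum_le. intros j Hj. specialize (Hu j Hj). specialize (Hb j Hj).
    apply lt_INR in Hb. assert (0 <= INR (nth j al 0%nat)) by apply pos_INR. nra.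
Qed.

Lemma ce_eq_1 a b : ce a = ce b -> ce (a - b) = RtoC 1.
Proof.
  intros E. apply (Cmult_reg_r _ (ce b)) in E || idtac.
  assert (H : Cmult (ce (a - b)) (ce b) = Cmult (RtoC 1) (ce b)).
  { rewrite <- ce_add. replace (a - b + b) with a by ring. rewrite E. ring. }
  replace (ce (a - b)) with (Cmult (Cmult (ce (a - b)) (ce b)) (Cinv (ce b))) by (field; apply ce_neq0).
  rewrite H. field. apply ce_neq0.
Qed.

Lemma indep n u K (Hpos : forall j, (j < n)%nat -> 0 < u j) (Hind : Q_lin_indep n u)
  L (a : list nat -> R) :
  NoDup L -> (forall r, In r L -> length r = n /\ forall j, (nth j r 0%nat <= K)%nat) ->
  (forall t, good_time n u t ->
     Csum (map (fun r => Cmult (RtoC (a r)) (Cprod_lt n (fun j => phi (nth j r 0%nat) (t * u j)))) L) = RtoC 0) ->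
  forall r, In r L -> a r = 0.
Proof.
  intros Hnd HL Hs.
  set (A := (2 * K + 2)%nat). set (B := box n A).
  set (Cf := fun al => Csum (map (fun r => Cmult (RtoC (a r))
                 (Cprod_lt n (fun j => RtoC (Qpol K (nth j r 0%nat) (nth j al 0%nat))))) L)).
  assert (Hexp : forall t, good_time n u t ->
            Csum (map (fun al => Cmult (Cf al) (ce (t * lam n u al))) B) = RtoC 0).
  { intros t Ht. destruct Ht as [Ht0 Htu].
    rewrite <- (Cmult_0_l (Cprod_lt n (fun j => Cpow (Cminus (RtoC 1) (ce (t * u j))) (S K)))).
    rewrite <- (Hs t (conj Ht0 Htu)). rewrite <- Csum_map_scal_r.
    transitivity (Csum (map (fun r => Cmult (RtoC (a r)) (Csum (map (fun al =>
        Cmult (Cprod_lt n (fun j => RtoC (Qpol K (nth j r 0%nat) (nth j al 0%nat)))) (ce (t * lam n u al))) B))) L)).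
    - unfold Cf.
      transitivity (Csum (map (fun al => Csum (map (fun r => Cmult (RtoC (a r)) (Cmult
          (Cprod_lt n (fun j => RtoC (Qpol K (nth j r 0%nat) (nth j al 0%nat)))) (ce (t * lam n u al)))) L)) B)).
      + apply Csum_map_ext_in. intros al _. rewrite <- Csum_map_scal_r. apply Csum_map_ext_in. intros; ring.
      + rewrite Csum_swap. apply Csum_map_ext_in. intros r _. rewrite <- Csum_map_scal. auto.
    - apply Csum_map_ext_in. intros r Hr. rewrite <- Cmult_assoc. f_equal.
      destruct (HL r Hr) as [_ Hb].
      rewrite <- Cprod_lt_mult.
      rewrite (Cprod_lt_ext n _ (fun j => ev (Qpol K (nth j r 0%nat)) A (ce (t * u j / 2)))).
      2:{ intros j Hj. apply phi_Q; auto. }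
      unfold ev. rewrite expand. apply Csum_map_ext_in. intros al _.
      rewrite Cprod_lt_mult. f_equal.
      rewrite (Cprod_lt_ext n _ (fun j => ce (t * (INR (nth j al 0%nat) * (u j / 2))))).
      + rewrite Cprod_ce. unfold lam. rewrite Rsum_scal. auto.
      + intros j _. rewrite ce_pow. f_equal. field. }
  assert (HSu : 0 <= Rsum_lt n u).
  { pose proof (Rsum_le n (fun _ => 0) u ltac:(intros j Hj; specialize (Hpos j Hj); lra)) as H0.
    rewrite Rsum_zero in H0 by auto. lra. }
  set (Su := Rsum_lt n u) in *. set (N := length B).
  assert (HN : 0 <= INR N) by apply pos_INR.
  assert (HA : 0 <= INR A) by apply pos_INR.
  set (D := (INR N + INR A * Su + 1) * (Su + 1)).
  assert (HD1 : 1 <= D) by (unfold D; nra).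
  set (h := / D).
  assert (Hh : 0 < h) by (unfold h; apply Rinv_0_lt_compat; lra).
  assert (HPI : 3 < PI) by (pose proof PI2_3_2; lra).
  assert (HCf : forall al, In al B -> Cf al = RtoC 0).
  { apply (vandermonde B Cf (fun al => ce (h * lam n u al))).
    - apply box_NoDup.
    - intros x y Hx Hy E.
      apply lam_inj with (n := n) (u := u); auto.
      + apply (box_in _ _ _ Hx).
      + apply (box_in _ _ _ Hy).
      + apply ce_eq_1 in E.
        destruct (Req_dec (lam n u x) (lam n u y)) as [Heq|Hne]; auto. exfalso.
        apply (ce_not1' (h * lam n u x - h * lam n u y)); auto.
        destruct (lam_bound n u A x Hpos Hx) as [Hx1 Hx2].
        destruct (lam_bound n u A y Hpos Hy) as [Hy1 Hy2].
        fold Su in Hx2, Hy2.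
        replace (h * lam n u x - h * lam n u y) with (h * (lam n u x - lam n u y)) by ring.
        rewrite Rabs_mult, (Rabs_right h) by lra. split.
        * apply Rmult_lt_0_compat; auto. apply Rabs_pos_lt. lra.
        * assert (Habs : Rabs (lam n u x - lam n u y) <= INR A * Su) by (apply Rabs_le; lra).
          assert (HAD : INR A * Su < D) by (unfold D; nra).
          assert (h * Rabs (lam n u x - lam n u y) < 1).
          { unfold h. apply (Rmult_lt_reg_l D). lra. rewrite <- Rmult_assoc, Rinv_r by lra. nra. }
          lra.
    - intros x _. apply ce_neq0.
    - intros m Hm.
      assert (Hgood : good_time n u (INR m * h)).
      { split.
        - apply Rmult_integral_contrapositive_currified; [apply not_0_INR; lia|lra].
        - intros j Hj. apply ce_not1.
          assert (Huj : u j <= Su) by (apply (Rsum_ge_term n u j); auto; intros; apply Rlt_le; auto).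
          specialize (Hpos j Hj).
          assert (Hm1 : 1 <= INR m) by (apply (le_INR 1); lia).
          assert (HmN : INR m <= INR N) by (apply le_INR; lia).
          split. apply Rmult_lt_0_compat; [apply Rmult_lt_0_compat|]; lra.
          assert (INR m * u j < D) by (unfold D; nra).
          assert (INR m * h * u j < 1).
          { unfold h. apply (Rmult_lt_reg_l D). lra.
            replace (D * (INR m * / D * u j)) with (INR m * u j) by (field; lra). lra. }
          lra. }
      rewrite <- (Hexp _ Hgood). apply Csum_map_ext_in. intros al _.
      rewrite ce_pow. f_equal. f_equal. ring. }
  intros r Hr. apply RtoC_inj.
  apply (tensor (Qpol K) K A (row_indep_C K) n L (fun r => RtoC (a r))); auto.
Qed.

Lemma Csum_all_zero l : (forall x, In x l -> x = RtoC 0) -> Csum l = RtoC 0.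
Proof. induction l; simpl; intros H; auto. rewrite IHl by auto. rewrite (H a) by auto. ring. Qed.

Lemma Dpart_zero j : Dpart j (fun _ => RtoC 0) = (fun _ => RtoC 0).
Proof.
  apply functional_extensionality. intros th. unfold Dpart.
  change (fun x : R => fst (RtoC 0)) with (fun _ : R => 0).
  change (fun x : R => snd (RtoC 0)) with (fun _ : R => 0).
  rewrite Derive_const. apply C_ext; simpl; ring.
Qed.

Lemma iter_zero a j : iter_op a (Dpart j) (fun _ => RtoC 0) = (fun _ => RtoC 0).
Proof. induction a; simpl; auto. rewrite IHa. apply Dpart_zero. Qed.

Lemma Dmulti_from_zero r : forall j, Dmulti_from j r (fun _ => RtoC 0) = (fun _ => RtoC 0).
Proof. induction r; intros j; simpl; auto. rewrite IHr. apply iter_zero. Qed.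

Lemma Pk_zero_fun n c t k th : Pk n c t k (fun _ => RtoC 0) th = RtoC 0.
Proof.
  unfold Pk. apply Csum_all_zero. intros x Hx. apply in_flat_map in Hx. destruct Hx as [d [_ Hx]].
  destruct (Nat.leb (2 * d - 2) k); [|contradiction].
  apply in_map_iff in Hx. destruct Hx as [r [<- _]]. unfold Dmulti. rewrite Dmulti_from_zero. ring.
Qed.

Lemma Pk0 n c t g th : c_admissible n c -> Pk n c t 0 g th = RtoC 0.
Proof.
  intros Hc. unfold Pk. apply Csum_all_zero. intros x Hx. apply in_flat_map in Hx. destruct Hx as [d [Hd Hx]].
  apply in_seq in Hd. replace d with 1%nat in * by lia. simpl in Hx.
  try rewrite app_nil_r in Hx. apply in_map_iff in Hx. destruct Hx as [r [<- Hr]].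
  destruct (multi_in _ _ _ Hr) as [H1 H2]. rewrite Hc by auto. rewrite Rmult_0_l. ring.
Qed.

Lemma Pcomp_zero n c t ks g : c_admissible n c -> In 0%nat ks -> Pcomp n c t ks g = (fun _ => RtoC 0).
Proof.
  intros Hc. induction ks as [|k ks IH]; intros Hin. contradiction.
  unfold Pcomp; simpl fold_right. apply functional_extensionality. intros th.
  destruct Hin as [Hk|Hin].
  - subst k. apply Pk0; auto.
  - fold (Pcomp n c t ks g). rewrite IH by auto. apply Pk_zero_fun.
Qed.

Lemma flat_map_ext_in' {A B} (f g : A -> list B) l : (forall x, In x l -> f x = g x) -> flat_map f l = flat_map g l.
Proof. induction l; simpl; intros H; auto. rewrite H, IHl; auto. Qed.

Definition CoefEq (n : nat) (c c' : list nat -> nat -> R) (s : nat) :=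
  forall d r, (1 <= d)%nat -> (2 * d - 2 <= s)%nat -> In r (multi n d) -> c r (s + 2 - 2 * d)%nat = c' r (s + 2 - 2 * d)%nat.

Lemma Pk_ext n c c' t k g th : CoefEq n c c' k -> Pk n c t k g th = Pk n c' t k g th.
Proof.
  intros H. unfold Pk. f_equal. apply flat_map_ext_in'. intros d Hd. apply in_seq in Hd.
  destruct (Nat.leb_spec (2 * d - 2) k); auto. apply map_ext_in. intros r Hr. rewrite H; auto. lia.
Qed.

Lemma Pcomp_ext n c c' t ks g : (forall k, In k ks -> CoefEq n c c' k) -> Pcomp n c t ks g = Pcomp n c' t ks g.
Proof.
  induction ks as [|k ks IH]; intros H; auto.
  unfold Pcomp; simpl fold_right. fold (Pcomp n c t ks g). fold (Pcomp n c' t ks g).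
  rewrite IH by (intros; apply H; simpl; auto). apply functional_extensionality. intros th.
  apply Pk_ext. apply H; simpl; auto.
Qed.

Definition Ls (n s : nat) : list (list nat) :=
  flat_map (fun d => if Nat.leb (2 * d - 2) s then multi n d else []) (seq 1 (S s)).

Lemma Ls_in n s r : In r (Ls n s) -> length r = n /\ (1 <= lsum r <= S s)%nat /\ (2 * lsum r - 2 <= s)%nat.
Proof.
  intros H. unfold Ls in H. apply in_flat_map in H. destruct H as [d [Hd H]]. apply in_seq in Hd.
  destruct (Nat.leb_spec (2 * d - 2) s); [|contradiction]. destruct (multi_in _ _ _ H). subst. lia.
Qed.

Lemma Ls_NoDup n s : NoDup (Ls n s).
Proof.
  apply NoDup_flat_map'. apply seq_NoDup.
  - intros d _. destruct (Nat.leb (2 * d - 2) s). apply multi_NoDup. constructor.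
  - intros x y z _ _ Hx Hy. destruct (Nat.leb (2 * x - 2) s); [|contradiction].
    destruct (Nat.leb (2 * y - 2) s); [|contradiction].
    destruct (multi_in _ _ _ Hx), (multi_in _ _ _ Hy). lia.
Qed.

Lemma Csum_flat_if {B} (l : list nat) (b : nat -> bool) (M : nat -> list B) (g : nat -> B -> C) (G : B -> C) :
  (forall d r, In d l -> In r (M d) -> g d r = G r) ->
  Csum (flat_map (fun d => if b d then map (g d) (M d) else []) l) =
  Csum (map G (flat_map (fun d => if b d then M d else []) l)).
Proof.
  induction l as [|d l IH]; intros H; simpl; auto.
  rewrite map_app, !Csum_app, IH by (intros; apply H; simpl; auto). f_equal.
  destruct (b d); auto. f_equal. apply map_ext_in. intros; apply H; simpl; auto.
Qed.

Lemma VCoef_sum n c u t s : good_time n u t ->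
  VCoef n c u t s = Csum (map (fun r => Cmult (RtoC (c r (s + 2 - 2 * lsum r)%nat))
                                   (Cprod_lt n (fun j => phi (nth j r 0%nat) (t * u j)))) (Ls n s)).
Proof.
  intros [Ht Hu]. unfold VCoef, Pk, Ls. apply Csum_flat_if.
  intros d r _ Hr. destruct (multi_in _ _ _ Hr) as [Hl Hs]. rewrite Dmulti_F_u by auto. rewrite Hs.
  assert (Htd : t ^ d <> 0) by (apply pow_nonzero; auto).
  transitivity (Cmult (RtoC (c r (s + 2 - 2 * d)%nat * / t ^ d * t ^ d)) (Cprod_lt n (fun j => phi (nth j r 0%nat) (t * u j)))).
  - rewrite !RtoC_mult. ring.
  - f_equal. f_equal. field. auto.
Qed.

Lemma Pcomp_eq n c c' t s m ks g : c_admissible n c -> c_admissible n c' ->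
  (forall k, (k < s)%nat -> CoefEq n c c' k) -> (2 <= m)%nat -> In ks (multi m s) ->
  Pcomp n c t ks g = Pcomp n c' t ks g.
Proof.
  intros Hc Hc' IH Hm Hks. destruct (multi_in _ _ _ Hks) as [Hl Hs].
  destruct (in_dec Nat.eq_dec 0%nat ks) as [H0|H0].
  - rewrite !Pcomp_zero; auto.
  - apply Pcomp_ext. intros k Hk. apply IH. rewrite <- Hs. apply in_lt_lsum; auto. lia.
    intros y Hy. destruct y; [contradiction|lia].
Qed.

Lemma Cplus_cancel a b b' x : Cplus a (Cplus b x) = Cplus a (Cplus b' x) -> b = b'.
Proof. intros H. replace b with (Cminus (Cminus (Cplus a (Cplus b x)) a) x) by ring. rewrite H. ring. Qed.

Lemma step_V n u c c' t s : c_admissible n c -> c_admissible n c' -> good_time n u t ->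
  (forall k, (k < S s)%nat -> CoefEq n c c' k) ->
  TrCoef n c u t (S s) = TrCoef n c' u t (S s) -> VCoef n c u t (S s) = VCoef n c' u t (S s).
Proof.
  intros Hc Hc' [Ht Hu] IH E. unfold TrCoef in E.
  change (seq 0 (S (S s))) with (0%nat :: 1%nat :: seq 2 s) in E.
  rewrite !Csum_map_cons in E.
  assert (E0 : Csum (map (fun ks => Pcomp n c t ks (Fmodel n t) u) (multi 0 (S s))) =
               Csum (map (fun ks => Pcomp n c' t ks (Fmodel n t) u) (multi 0 (S s)))).
  { apply Csum_map_ext_in. intros ks Hks. destruct (multi_in _ _ _ Hks) as [Hl _].
    destruct ks; [reflexivity|simpl in Hl; lia]. }
  assert (E2 : forall F1 F2, Csum (map F1 (seq 2 s)) = Csum (map F2 (seq 2 s)) -> True) by auto.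
  assert (Er : Csum (map (fun m => Cmult (Cdiv (Cpow (Cmult Ci (RtoC t)) m) (RtoC (fact_R m)))
                 (Csum (map (fun ks => Pcomp n c t ks (Fmodel n t) u) (multi m (S s))))) (seq 2 s)) =
               Csum (map (fun m => Cmult (Cdiv (Cpow (Cmult Ci (RtoC t)) m) (RtoC (fact_R m)))
                 (Csum (map (fun ks => Pcomp n c' t ks (Fmodel n t) u) (multi m (S s))))) (seq 2 s))).
  { apply Csum_map_ext_in. intros m Hm. apply in_seq in Hm. f_equal. apply Csum_map_ext_in.
    intros ks Hks. rewrite (Pcomp_eq n c c' t (S s) m ks (Fmodel n t)); auto; lia. }
  rewrite E0, Er in E. rewrite !multi_1 in E. simpl map in E. simpl Csum in E.
  unfold VCoef.
  change (Pcomp n c t [S s] (Fmodel n t) u) with (Pk n c t (S s) (Fmodel n t) u) in E.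
  change (Pcomp n c' t [S s] (Fmodel n t) u) with (Pk n c' t (S s) (Fmodel n t) u) in E.
  set (V := Pk n c t (S s) (Fmodel n t) u) in *. set (V' := Pk n c' t (S s) (Fmodel n t) u) in *.
  apply Cplus_cancel in E.
  assert (Hct : Cmult Ci (RtoC t) <> RtoC 0).
  { apply Cmult_neq_0. intros H; injection H; lra. intros H; injection H; lra. }
  assert (E' : Cmult (Cminus V V') (Cmult Ci (RtoC t)) = RtoC 0).
  { transitivity (Cminus (Cmult (Cdiv (Cpow (Cmult Ci (RtoC t)) 1) (RtoC (fact_R 1))) (Cplus V (RtoC 0)))
                         (Cmult (Cdiv (Cpow (Cmult Ci (RtoC t)) 1) (RtoC (fact_R 1))) (Cplus V' (RtoC 0)))).
    - simpl fact_R. simpl Cpow. rewrite Rmult_1_r. field; try (intros H; injection H; lra).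
    - rewrite E. ring. }
  apply Cmult_reg_r in E'; auto.
  replace V with (Cplus (Cminus V V') V') by ring. rewrite E'. ring.
Qed.

Lemma CoefEq_0 n c c' : c_admissible n c -> c_admissible n c' -> CoefEq n c c' 0.
Proof.
  intros Hc Hc' d r Hd1 Hd2 Hr. replace d with 1%nat in * by lia.
  destruct (multi_in _ _ _ Hr). simpl. rewrite Hc, Hc'; auto.
Qed.

Theorem theorem4 (n : nat) (u : nat -> R)
  (Hn : (1 <= n)%nat)
  (Hpos : forall j, (j < n)%nat -> 0 < u j)
  (Hind : Q_lin_indep n u)
  (l : nat) (c c' : list nat -> nat -> R)
  (Hc : c_admissible n c) (Hc' : c_admissible n c')
  (Htr : forall s, (s <= l)%nat -> forall t, good_time n u t ->
           TrCoef n c u t s = TrCoef n c' u t s) :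
  forall s, (s <= l)%nat -> forall t, good_time n u t ->
    VCoef n c u t s = VCoef n c' u t s.
Proof.
  assert (Hall : forall s, (s <= l)%nat -> CoefEq n c c' s).
  { intros s. induction s as [s IH] using (well_founded_induction Wf_nat.lt_wf). intros Hs.
    destruct s as [|s].
    - apply CoefEq_0; auto.
    - assert (HV : forall t, good_time n u t -> VCoef n c u t (S s) = VCoef n c' u t (S s)).
      { intros t Ht. apply step_V; auto. intros k Hk. apply IH; auto; lia. }
      set (a := fun r => c r (S s + 2 - 2 * lsum r)%nat - c' r (S s + 2 - 2 * lsum r)%nat).
      assert (Ha : forall r, In r (Ls n (S s)) -> a r = 0).
      { apply (indep n u (S (S s)) Hpos Hind (Ls n (S s)) a).
        - apply Ls_NoDup.
        - intros r Hr. destruct (Ls_in _ _ _ Hr) as [Hl [Hb _]]. split; auto.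
          intros j. pose proof (nth_le_lsum r j). lia.
        - intros t Ht. specialize (HV t Ht). rewrite !VCoef_sum in HV by auto.
          unfold a. rewrite (Csum_map_ext_in _ (fun r => Cminus
              (Cmult (RtoC (c r (S s + 2 - 2 * lsum r)%nat)) (Cprod_lt n (fun j => phi (nth j r 0%nat) (t * u j))))
              (Cmult (RtoC (c' r (S s + 2 - 2 * lsum r)%nat)) (Cprod_lt n (fun j => phi (nth j r 0%nat) (t * u j)))))).
          + rewrite Csum_map_minus, HV. ring.
          + intros r _. rewrite RtoC_minus. ring. }
      intros d r Hd1 Hd2 Hr. destruct (multi_in _ _ _ Hr) as [Hl Hsum].
      assert (HrL : In r (Ls n (S s))).
      { unfold Ls. apply in_flat_map. exists d. split. apply in_seq; lia.
        destruct (Nat.leb_spec (2 * d - 2) (S s)); [auto|lia]. }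
      specialize (Ha r HrL). unfold a in Ha. rewrite Hsum in Ha. lra. }
  intros s Hs t Ht. unfold VCoef. apply Pk_ext. apply Hall; auto.
Qed.
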